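(* Atomless $P$-operators are closed with respect to $d_M$: if $\{A_i\}$ is a sequence of $P$-operators each defined on an atomless probability space and $B$ is a $P$-operator on a probability space $\Omega_2$ with $d_M(A_i,B)\to0$, then $\Omega_2$ is atomless.
   Context: A $P$-operator on a probability space $\Omega$ is a linear $A:L^\infty(\Omega)\to L^1(\Omega)$, $v\mapsto vA$, with $\sup_v\|vA\|_1/\|v\|_\infty<\infty$; it is atomless if $\Omega$ is atomless. $\mathcal{S}_k(A)$ is the set of joint distributions on $\mathbb{R}^{2k}$ of $(v_1,\dots,v_k,v_1A,\dots,v_kA)$ over measurable $v_i:\Omega\to[-1,1]$; $d_M(A,B)=\sum_k2^{-k}d_H(\mathcal{S}_k(A),\mathcal{S}_k(B))$ with $d_H$ the Hausdorff distance induced by the Lévy–Prokhorov metric. *)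

(* Defs.v *)
From HB Require Import structures.
From mathcomp Require Import all_boot all_order all_algebra.
From mathcomp Require Import all_classical all_reals all_analysis.
Set Implicit Arguments. Unset Strict Implicit. Unset Printing Implicit Defensive.
Import Order.TTheory GRing.Theory Num.Theory.
Import numFieldNormedType.Exports.
Local Open Scope classical_set_scope.
Local Open Scope ring_scope.

Section PoperatorDefs.
Variable R : realType.

Definition atomless d (T : measurableType d) (P : probability T R) : Prop :=
  forall E : set T, measurable E -> (0 < P E)%E ->
    exists2 F : set T, measurable F /\ F `<=` E & (0 < P F < P E)%E.

Definition Linf d (T : measurableType d) (P : probability T R) (v : T -> R) : Prop :=
  measurable_fun setT v /\ exists c : R, {ae P, forall x, `|v x| <= c}.

(* A P-operator: a linear map L^oo(P) -> L^1(P), v |-> vA, with finite norm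
   sup_v ||vA||_1 / ||v||_oo.  It is represented on representatives: A maps
   essentially bounded measurable functions to integrable ones, respects
   a.e. equality, is linear up to a.e. equality, and is bounded. *)
Definition Poperator d (T : measurableType d) (P : probability T R)
    (A : (T -> R) -> (T -> R)) : Prop :=
  [/\ forall v, Linf P v ->
        measurable_fun setT (A v) /\ P.-integrable setT (fun x => (A v x)%:E),
      forall v w, Linf P v -> Linf P w -> {ae P, forall x, v x = w x} ->
        {ae P, forall x, A v x = A w x},
      forall (a b : R) v w, Linf P v -> Linf P w ->
        {ae P, forall x, A (fun y => a * v y + b * w y) x = a * A v x + b * A w x}
    & exists C : R, forall v (c : R), Linf P v -> {ae P, forall x, `|v x| <= c} ->
        (\int[P]_x (`|A v x|)%:E <= (C * c)%:E)%E].

Definition edist n (x y : 'rV[R]_n) : R :=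
  Num.sqrt (\sum_(i < n) (x ord0 i - y ord0 i) ^+ 2).

Definition eopen n (U : set 'rV[R]_n) : Prop :=
  forall x, U x -> exists2 e : R, 0 < e & [set y | edist y x < e] `<=` U.

Definition borel n : set (set 'rV[R]_n) := <<s [set U | eopen U] >>.

Definition neigh n (A : set 'rV[R]_n) (e : R) : set 'rV[R]_n :=
  [set x | exists2 a, A a & edist x a < e].

Definition law d (T : measurableType d) (P : probability T R) n
    (X : T -> 'rV[R]_n) : set 'rV[R]_n -> R :=
  fun A => fine (P (X @^-1` A)).

Definition LP n (mu nu : set 'rV[R]_n -> R) : R :=
  inf [set e : R | 0 < e /\ forall A, @borel n A ->
         mu A <= nu (neigh A e) + e /\ nu A <= mu (neigh A e) + e].

Definition dH n (S S' : set (set 'rV[R]_n -> R)) : R :=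
  Num.max (sup [set inf [set LP mu nu | nu in S'] | mu in S])
          (sup [set inf [set LP mu nu | mu in S] | nu in S']).

Definition jointvec d (T : measurableType d) (A : (T -> R) -> (T -> R)) k
    (v : 'I_k -> T -> R) (x : T) : 'rV[R]_(k + k) :=
  \row_(j < k + k) match fintype.split j with inl i => v i x | inr i => A (v i) x end.

Definition Sk d (T : measurableType d) (P : probability T R)
    (A : (T -> R) -> (T -> R)) (k : nat) : set (set 'rV[R]_(k + k) -> R) :=
  [set law P (jointvec A v) | v in
     [set v : 'I_k -> T -> R | forall i, measurable_fun setT (v i) /\
                                 forall x, -1 <= v i x <= 1]].

Arguments Sk {d T} P A k.

Definition dM d (T : measurableType d) (P : probability T R) (A : (T -> R) -> (T -> R))
    d' (T' : measurableType d') (P' : probability T' R) (B : (T' -> R) -> (T' -> R)) : R :=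
  limn (fun N => \sum_(1 <= k < N) (2 ^- k * dH (Sk P A k) (Sk P' B k))).

End PoperatorDefs.

(* Main.v *)
Require Import Defs.
From HB Require Import structures.
From mathcomp Require Import all_boot all_order all_algebra.
From mathcomp Require Import all_classical all_reals all_analysis.
From mathcomp Require Import measurable_realfun.
From mathcomp Require Import lra ring.
Import Order.TTheory GRing.Theory Num.Theory.
Import numFieldNormedType.Exports.
Local Open Scope classical_set_scope.
Local Open Scope ring_scope.
Set Implicit Arguments. Unset Strict Implicit. Unset Printing Implicit Defensive.

Section P1.
Variable R : realType.

Lemma mset_lt d (T : measurableType d) (f g : T -> R) :
  measurable_fun setT f -> measurable_fun setT g -> measurable [set x | f x < g x].
Proof.
move=> mf mg; have := measurable_fun_ltr mf mg measurableT (_ : measurable [set true]).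
rewrite setTI => /(_ I) H.
by rewrite (_ : [set x | f x < g x] = (fun x => f x < g x) @^-1` [set true]).
Qed.

Lemma mset_le d (T : measurableType d) (f g : T -> R) :
  measurable_fun setT f -> measurable_fun setT g -> measurable [set x | f x <= g x].
Proof.
move=> mf mg; have := measurable_fun_ler mf mg measurableT (_ : measurable [set true]).
rewrite setTI => /(_ I) H.
by rewrite (_ : [set x | f x <= g x] = (fun x => f x <= g x) @^-1` [set true]).
Qed.

Lemma sqrt_lt (s e : R) : 0 < e -> (Num.sqrt s < e) = (s < e ^+ 2).
Proof.
move=> e0; rewrite -[e in LHS](@ger0_norm _ e) ?ltW// -sqrtr_sqr ltr_sqrt //.
exact: exprn_gt0.
Qed.

Definition box n (qe : {ffun 'I_n -> rat} * rat) : set 'rV[R]_n :=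
  [set y | forall j, `|y ord0 j - ratr (qe.1 j)| < ratr qe.2].

Lemma preimage_borel d (T : measurableType d) n (X : T -> 'rV[R]_n) :
  (forall j, measurable_fun setT (fun x => X x ord0 j)) ->
  forall A, borel A -> measurable (X @^-1` A).
Proof.
move=> mX.
pose C := [set A : set 'rV[R]_n | measurable (X @^-1` A)].
have sC : sigma_algebra setT C.
  split.
  - by rewrite /C /= preimage_set0.
  - move=> A; rewrite /C /= setTD preimage_setC; exact: measurableC.
  - move=> F; rewrite /C /= preimage_bigcup => mF; exact: bigcupT_measurable.
move=> A; apply: (smallest_sub sC) => U oU; rewrite /C /=.
have mbox (qe : {ffun 'I_n -> rat} * rat) : measurable (X @^-1` box qe).
  rewrite (_ : X @^-1` box qe = \bigcap_(j in [set: 'I_n])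
     [set x | `|X x ord0 j - ratr (qe.1 j)| < ratr qe.2]).
    apply: fin_bigcap_measurable; first exact: finite_finset.
    move=> j _; apply: mset_lt; last exact: measurable_cst.
    apply: measurableT_comp; first exact: normr_measurable.
    apply: measurable_funB => //; exact: measurable_cst.
  by apply/seteqP; split => x /= H j; [move=> _; exact: H | exact: H].
pose F (qe : {ffun 'I_n -> rat} * rat) := X @^-1` (if `[< box qe `<=` U >] then box qe else set0).
have -> : X @^-1` U = \bigcup_qe F qe.
  apply/seteqP; split => x /=.
    move=> /oU [e e0 He].
    pose eta := e / (2 * n.+1%:R).
    have eta0 : 0 < eta by rewrite divr_gt0 // mulr_gt0.
    have [h /andP[h0 h1]] : exists h : rat, (0 < ratr h :> R) && (ratr h < eta).
      by have [h] := rat_in_itvoo eta0; rewrite in_itv /=; exists h.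
    have qj j : exists q : rat, `|X x ord0 j - ratr q| < ratr h.
      have : X x ord0 j - ratr h < X x ord0 j + ratr h by rewrite ltrD2l gtrN.
      move=> /rat_in_itvoo [q]; rewrite in_itv /= => /andP[q1 q2]; exists q.
      rewrite ltr_norml; apply/andP; split; lra.
    have [qf Hqf] := choice qj.
    exists ([ffun j => qf j], h) => //.
    rewrite /F asboolT /=.
      by move=> j; rewrite ffunE.
    move=> y /= Hy; apply: He => /=.
    rewrite /edist sqrt_lt //.
    have Hy' j : `|y ord0 j - ratr (qf j)| < ratr h by have := Hy j; rewrite ffunE.
    apply: (le_lt_trans (y := \sum_(i < n) (2 * eta) ^+ 2)).
      apply: ler_sum => j _.
      have := Hy' j; have := Hqf j; rewrite !ltr_norml => /andP[a1 a2] /andP[b1 b2].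
      have eq1 : 0 < 2 * eta by rewrite mulr_gt0.
      nra.
    rewrite sumr_const card_ord -mulr_natr.
    have Ha : 2 * eta * n.+1%:R = e by rewrite /eta; field.
    have n0 : 0 <= n%:R :> R by [].
    rewrite -Ha -addn1 natrD.
    have : 0 < 2 * eta by rewrite mulr_gt0.
    nra.
  by move=> [qe _]; rewrite /F; case: asboolP => // /[apply].
apply: countable_bigcupT_measurable; first exact: countableP.
move=> qe; rewrite /F; case: asboolP => _ //; rewrite preimage_set0; exact: measurable0.
Qed.
End P1.

Section P2.
Variable R : realType.

Lemma prE d (T : measurableType d) (P : probability T R) (A : set T) :
  measurable A -> (fine (P A))%:E = P A.
Proof. by move=> mA; rewrite fineK // fin_num_measure. Qed.

Lemma pr_ge0 d (T : measurableType d) (P : probability T R) (A : set T) :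
  0 <= fine (P A).
Proof. exact: fine_ge0. Qed.

Lemma pr_le1 d (T : measurableType d) (P : probability T R) (A : set T) :
  measurable A -> fine (P A) <= 1.
Proof. by move=> mA; rewrite -lee_fin prE // probability_le1. Qed.

Lemma pr_le d (T : measurableType d) (P : probability T R) (A B : set T) :
  measurable A -> measurable B -> A `<=` B -> fine (P A) <= fine (P B).
Proof.
move=> mA mB AB; rewrite -lee_fin !prE //; apply: le_measure => //; rewrite inE //.
Qed.

Definition Lw n (mu : set 'rV[R]_n -> R) :=
  (forall S, 0 <= mu S) /\ (forall A, borel A -> mu A <= 1).

Lemma law_Lw d (T : measurableType d) (P : probability T R) n (X : T -> 'rV[R]_n) :
  (forall j, measurable_fun setT (fun x => X x ord0 j)) -> Lw (law P X).
Proof.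
move=> mX; split => [S|A bA]; first exact: pr_ge0.
apply: pr_le1; exact: preimage_borel.
Qed.

Definition LPset n (mu nu : set 'rV[R]_n -> R) := [set e : R | 0 < e /\ forall A, @borel R n A ->
         mu A <= nu (neigh A e) + e /\ nu A <= mu (neigh A e) + e].

Lemma LPE n (mu nu : set 'rV[R]_n -> R) : LP mu nu = inf (LPset mu nu).
Proof. by []. Qed.

Lemma LPset1 n (mu nu : set 'rV[R]_n -> R) : Lw mu -> Lw nu -> LPset mu nu 1.
Proof.
move=> [m0 m1] [n0 n1]; split => // A bA; split.
  by have := m1 A bA; have := n0 (neigh A 1); lra.
by have := n1 A bA; have := m0 (neigh A 1); lra.
Qed.

Lemma LP_bounds n (mu nu : set 'rV[R]_n -> R) : Lw mu -> Lw nu ->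
  0 <= LP mu nu <= 1.
Proof.
move=> Hm Hn; have H1 := LPset1 Hm Hn.
have lb : lbound (LPset mu nu) 0 by move=> e [e0 _]; exact: ltW.
apply/andP; split; rewrite LPE.
  by apply: lb_le_inf => //; exists 1.
by apply: ge_inf => //; exists 0.
Qed.

Lemma LP_ge n (mu nu : set 'rV[R]_n -> R) (δ : R) : Lw mu -> Lw nu ->
  (forall e, LPset mu nu e -> δ <= e) -> δ <= LP mu nu.
Proof.
move=> Hm Hn H; rewrite LPE; apply: lb_le_inf => //.
by exists 1; exact: LPset1.
Qed.

Definition allLw n (S : set (set 'rV[R]_n -> R)) := S !=set0 /\ forall mu, S mu -> Lw mu.

Lemma infS_bounds n (S' : set (set 'rV[R]_n -> R)) mu : Lw mu -> allLw S' ->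
  0 <= inf [set LP mu nu | nu in S'] <= 1.
Proof.
move=> Hm [[nu0 Hnu0] HS']; apply/andP; split.
  apply: lb_le_inf; first by exists (LP mu nu0), nu0.
  by move=> _ [nu Hnu <-]; have /andP[] := LP_bounds Hm (HS' _ Hnu).
apply: (le_trans (y := LP mu nu0)).
  apply: ge_inf; last by exists nu0.
  by exists 0 => _ [nu Hnu <-]; have /andP[] := LP_bounds Hm (HS' _ Hnu).
by have /andP[] := LP_bounds Hm (HS' _ Hnu0).
Qed.

Lemma infS_bounds' n (S : set (set 'rV[R]_n -> R)) nu : Lw nu -> allLw S ->
  0 <= inf [set LP mu nu | mu in S] <= 1.
Proof.
move=> Hn [[mu0 Hmu0] HS]; apply/andP; split.
  apply: lb_le_inf; first by exists (LP mu0 nu), mu0.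
  by move=> _ [mu Hmu <-]; have /andP[] := LP_bounds (HS _ Hmu) Hn.
apply: (le_trans (y := LP mu0 nu)).
  apply: ge_inf; last by exists mu0.
  by exists 0 => _ [mu Hmu <-]; have /andP[] := LP_bounds (HS _ Hmu) Hn.
by have /andP[] := LP_bounds (HS _ Hmu0) Hn.
Qed.

Lemma dH_bounds n (S S' : set (set 'rV[R]_n -> R)) : allLw S -> allLw S' ->
  0 <= dH S S' <= 1.
Proof.
move=> HS HS'; have [[mu0 Hmu0] LS] := HS; have [[nu0 Hnu0] LS'] := HS'.
rewrite /dH; apply/andP; split.
  rewrite le_max; apply/orP; left.
  apply: (le_trans (y := inf [set LP mu0 nu | nu in S'])).
    by have /andP[] := infS_bounds (LS _ Hmu0) HS'.
  apply: ub_le_sup; last by exists mu0.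
  by exists 1 => _ [mu Hmu <-]; have /andP[] := infS_bounds (LS _ Hmu) HS'.
rewrite ge_max; apply/andP; split.
  apply: ge_sup; first by exists (inf [set LP mu0 nu | nu in S']), mu0.
  by move=> _ [mu Hmu <-]; have /andP[] := infS_bounds (LS _ Hmu) HS'.
apply: ge_sup; first by exists (inf [set LP mu nu0 | mu in S]), nu0.
by move=> _ [nu Hnu <-]; have /andP[] := infS_bounds' (LS' _ Hnu) HS.
Qed.

Lemma dH_ge n (S S' : set (set 'rV[R]_n -> R)) mu0 (δ : R) : allLw S -> allLw S' ->
  S mu0 -> (forall nu, S' nu -> δ <= LP mu0 nu) -> δ <= dH S S'.
Proof.
move=> HS HS' Hmu0 H; have [_ LS] := HS; have [[nu0 Hnu0] LS'] := HS'.
rewrite /dH le_max; apply/orP; left.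
apply: (le_trans (y := inf [set LP mu0 nu | nu in S'])).
  apply: lb_le_inf; first by exists (LP mu0 nu0), nu0.
  by move=> _ [nu Hnu <-]; exact: H.
apply: ub_le_sup; last by exists mu0.
by exists 1 => _ [mu Hmu <-]; have /andP[] := infS_bounds (LS _ Hmu) HS'.
Qed.

End P2.

Section P3.
Variable R : realType.

Lemma Linf_bounded d (T : measurableType d) (P : probability T R) (v : T -> R) :
  measurable_fun setT v -> (forall x, -1 <= v x <= 1) -> Linf P v.
Proof.
move=> mv bv; split => //; exists 1; apply: aeW => x.
by rewrite ler_norml; exact: bv.
Qed.

Lemma jointvec_meas d (T : measurableType d) (P : probability T R) A k
  (v : 'I_k -> T -> R) : Poperator P A ->
  (forall i, measurable_fun setT (v i) /\ forall x, -1 <= v i x <= 1) ->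
  forall j, measurable_fun setT (fun x => jointvec A v x ord0 j).
Proof.
case=> HA _ _ _ Hv j; rewrite /jointvec.
under eq_fun do rewrite mxE.
case: (fintype.split j) => i; first exact: (Hv i).1.
by have [] := HA (v i) (Linf_bounded P (Hv i).1 (Hv i).2).
Qed.

Lemma Sk_allLw d (T : measurableType d) (P : probability T R) A (k : nat) :
  Poperator P A -> allLw (Sk P A (k:=k)).
Proof.
move=> HA; split.
  exists (law P (jointvec A (fun _ _ => 0))), (fun _ _ => 0) => // i; split.
    exact: measurable_cst.
  by move=> x; apply/andP; split; lra.
move=> mu; rewrite /Sk /= => -[v Hv <-]; apply: law_Lw; exact: (jointvec_meas HA Hv).
Qed.

Lemma geom_sum N : \sum_(1 <= k < N.+1) (2 ^- k : R) = 1 - 2 ^- N.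
Proof.
elim: N => [|N IH]; first by rewrite big_geq // expr0 invr1 subrr.
rewrite big_nat_recr //= IH exprS invfM.
set y := (2 ^+ N)^-1; lra.
Qed.

Lemma dM_ge (u : nat -> R) : (forall k, 0 <= u k <= 1) ->
  2^-1 * u 1%N <= limn (fun N => \sum_(1 <= k < N) (2 ^- k * u k)).
Proof.
move=> Hu.
set s := fun N => _.
have nd : nondecreasing_seq s.
  apply/nondecreasing_seqP => N; rewrite /s.
  case: N => [|N]; first by rewrite !big_geq.
  rewrite [X in _ <= X]big_nat_recr //= lerDl; apply: mulr_ge0.
    by rewrite invr_ge0 exprn_ge0.
  by have /andP[] := Hu N.+1.
have ub : has_ubound (range s).
  exists 1 => _ [N _ <-]; rewrite /s.
  case: N => [|N]; first by rewrite big_geq.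
  apply: (le_trans (y := \sum_(1 <= k < N.+1) (2 ^- k : R))).
    apply: ler_sum => k _.
    have h1 : (0 : R) <= 2 ^- k by rewrite invr_ge0 exprn_ge0.
    have /andP[h2 h3] := Hu k.
    set a := 2 ^- k in h1 *; nra.
  rewrite geom_sum gerBl invr_ge0 exprn_ge0 //.
have := nondecreasing_cvgn_le nd (nondecreasing_is_cvgn nd ub) 2.
by rewrite /s big_nat1 expr1.
Qed.

End P3.

Section P4.
Variable R : realType.
Context d (T : measurableType d) (P : probability T R).

Lemma mset_eq (f : T -> R) c : measurable_fun setT f -> measurable [set x | f x = c].
Proof.
move=> mf.
have := measurable_fun_eqr mf (measurable_cst c) measurableT (_ : measurable [set true]).
rewrite setTI => /(_ I) H.
rewrite (_ : [set x | f x = c] = (fun x => f x == c) @^-1` [set true]) //.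
by apply/seteqP; split => x /= /eqP.
Qed.

Lemma nullU (S : set T) (F : nat -> set T) :
  (forall k, measurable (F k) /\ P (F k) = 0%E) -> S `<=` \bigcup_k F k ->
  measurable S -> P S = 0%E.
Proof.
move=> HF SF mS; apply/(negligibleP _ mS).
apply: (negligibleS SF); apply: negligible_bigcup => k.
by have [mk Pk] := HF k; apply/(negligibleP _ mk).
Qed.

Lemma atom_const (E : set T) (f : T -> R) :
  measurable E -> (0 < P E)%E ->
  (forall F, measurable F -> F `<=` E -> ~ (0 < P F < P E)%E) ->
  measurable_fun setT f -> exists c, P (E `&` [set x | f x = c]) = P E.
Proof.
move=> mE PE0 atom mf.
have mG t : measurable (E `&` [set x | f x <= t]).
  by apply: measurableI => //; apply: mset_le => //; exact: measurable_cst.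
have mH t : measurable (E `&` [set x | t < f x]).
  by apply: measurableI => //; apply: mset_lt => //; exact: measurable_cst.
have dich F : measurable F -> F `<=` E -> P F = 0%E \/ P F = P E.
  move=> mF FE; have nab := atom F mF FE.
  have h0 : (0 <= P F)%E := measure_ge0 _ _.
  have h1 : (P F <= P E)%E by apply: le_measure; rewrite ?inE.
  have [F0|F0] := eqVneq (P F) 0%E; [by left | right].
  apply/eqP; rewrite eq_le h1 /= leNgt; apply/negP => lt; apply: nab.
  by rewrite lt lt0e F0 h0.
have finE : P E \is a fin_num by exact: fin_num_measure.
have compl t : P (E `&` [set x | f x <= t]) = P E -> P (E `&` [set x | t < f x]) = 0%E.
  move=> h.
  rewrite (_ : E `&` [set x | t < f x] = E `\` [set x | f x <= t]); last first.
    apply/seteqP; split => x /= [Ex H]; split => //.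
      by apply/negP; rewrite -ltNge.
    by move/negP: H; rewrite -ltNge.
  have mL : measurable [set x | f x <= t].
    by apply: mset_le => //; exact: measurable_cst.
  rewrite measureD //.
    by transitivity (P E - P E)%E; [congr (_ - _)%E; exact: h | exact: subee].
  by rewrite ltey_eq finE.
have GE : forall t, E `&` [set x | f x <= t] `<=` E by move=> t; exact: subIsetl.
have c1 : exists t, P (E `&` [set x | f x <= t]) = 0%E.
  apply: contrapT => nex.
  have all n : P (E `&` [set x | f x <= - n%:R]) = P E.
    by case: (dich _ (mG (- n%:R)) (GE (- n%:R))) => // h; exfalso; apply: nex; exists (- n%:R).
  suff : P E = 0%E by move=> h; rewrite h ltxx in PE0.
  apply: (@nullU _ (fun n : nat => E `&` [set x | - n%:R < f x])) => //.
    by move=> k; split => //; exact: compl (all k).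
  move=> x Ex; exists (Num.truncn (- f x)).+1 => //; split => //=.
  by rewrite ltrNl; exact: truncnS_gt.
have c2 : exists t, P (E `&` [set x | f x <= t]) = P E.
  apply: contrapT => nex.
  have all n : P (E `&` [set x | f x <= n%:R]) = 0%E.
    by case: (dich _ (mG n%:R) (GE n%:R)) => // h; exfalso; apply: nex; exists (n%:R).
  suff : P E = 0%E by move=> h; rewrite h ltxx in PE0.
  apply: (@nullU _ (fun n : nat => E `&` [set x | f x <= n%:R])) => //.
  move=> x Ex; exists (Num.truncn (f x)).+1 => //; split => //=.
  exact/ltW/truncnS_gt.
pose D := [set t | P (E `&` [set x | f x <= t]) = 0%E].
have hD : has_sup D.
  split; first by have [t Ht] := c1; exists t.
  have [t2 Ht2] := c2; exists t2 => t Dt; rewrite leNgt; apply/negP => lt.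
  set G2 := E `&` [set x | f x <= t2]; set Gt := E `&` [set x | f x <= t].
  have : (P G2 <= P Gt)%E.
    apply: le_measure; rewrite ?inE; try exact: mG.
    by move=> x [Ex H]; split => //=; exact: (le_trans H (ltW lt)).
  by rewrite Ht2 Dt leNgt PE0.
pose c := sup D.
have c3 : P (E `&` [set x | f x < c]) = 0%E.
  apply: (@nullU _ (fun k : nat => E `&` [set x | f x <= c - k.+1%:R^-1])).
  - move=> k; split => //.
    have k0 : 0 < k.+1%:R^-1 :> R by rewrite invr_gt0 ltr0n.
    have [t Dt Ht] := sup_adherent k0 hD.
    apply/eqP; rewrite eq_le measure_ge0 andbT -Dt.
    apply: le_measure; rewrite ?inE //.
    by move=> x [Ex H]; split => //=; rewrite (le_trans H) // ltW.
  - move=> x [Ex H]; have [k Hk] := ltr_add_invr H; exists k => //; split => //=.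
    by rewrite lerBrDr ltW.
  - by apply: measurableI => //; apply: mset_lt => //; exact: measurable_cst.
have c4 : P (E `&` [set x | c < f x]) = 0%E.
  apply: (@nullU _ (fun k : nat => E `&` [set x | c + k.+1%:R^-1 < f x])).
  - move=> k; split => //; apply: compl.
    case: (dich _ (mG (c + k.+1%:R^-1)) (GE (c + k.+1%:R^-1))) => // h.
    have : c + k.+1%:R^-1 <= c by apply: sup_upper_bound.
    by rewrite gerDl leNgt invr_gt0 ltr0n.
  - by move=> x [Ex H]; have [k Hk] := ltr_add_invr H; exists k.
  - by apply: measurableI => //; apply: mset_lt => //; exact: measurable_cst.
exists c.
have meq : measurable [set x | f x = c] by exact: mset_eq.
rewrite [RHS](measureDI P mE meq).
have N0 : P (E `\` [set x | f x = c]) = 0%E.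
  apply: (@nullU _ (fun k : nat => if k is 0%N then E `&` [set x | f x < c]
                                    else E `&` [set x | c < f x])).
  - case=> [|k]; split; try exact: c3; try exact: c4;
      by apply: measurableI => //; apply: mset_lt => //; exact: measurable_cst.
  - move=> x [Ex /eqP]; rewrite neq_lt => /orP[H|H]; [exists 0%N | exists 1%N] => //.
  - exact: measurableD.
apply/esym; transitivity (0 + P (E `&` [set x | f x = c]))%E.
  by congr (_ + _)%E; exact: N0.
exact: add0e.
Qed.

End P4.

Section P5.
Variable R : realType.
Context d (T : measurableType d) (P : probability T R).

Lemma pr_D (A B : set T) : measurable A -> measurable B -> B `<=` A ->
  fine (P (A `\` B)) = fine (P A) - fine (P B).
Proof.
move=> mA mB BA.
have := @measureD _ _ _ P A B mA mB (_ : (P A < +oo)%E).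
rewrite setIidr // => ->; last by rewrite ltey_eq fin_num_measure.
by rewrite fineB // fin_num_measure.
Qed.

Variables (eps : R) (N : nat) (Q : nat -> set T).
Hypotheses (mQ : forall n, measurable (Q n)) (Q0 : Q 0%N = setT)
  (QS : forall n, Q n.+1 `<=` Q n) (QN : Q N.+1 = set0)
  (Qe : forall n, fine (P (Q n)) - fine (P (Q n.+1)) < eps).

Lemma Qmono i j : (i <= j)%N -> Q j `<=` Q i.
Proof.
elim: j => [|j IH] ij; first by move: ij; rewrite leqn0 => /eqP ->.
move: ij; rewrite leq_eqVlt => /orP[/eqP->//|]; rewrite ltnS => ij.
move=> x /QS Hx; exact: IH.
Qed.

Lemma jx x : exists j, (j <= N)%N /\ Q j x /\ ~ Q j.+1 x.
Proof.
apply: contrapT => nex.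
have H j : (j <= N.+1)%N -> Q j x.
  elim: j => [|j IH] jN; first by rewrite Q0.
  have QJ := IH (ltnW jN).
  apply: contrapT => nQ; apply: nex; exists j; split => //.
have := H N.+1 (leqnn _); rewrite QN //.
Qed.

Definition aQ j := 1 - fine (P (Q j)).

Definition vQ x := \sum_(i < N.+1) (\1_(Q i.+1) x * (fine (P (Q i)) - fine (P (Q i.+1)))).

Lemma vQ_eval x j : (j <= N)%N -> Q j x -> ~ Q j.+1 x -> vQ x = aQ j.
Proof.
move=> jN Qj nQj; rewrite /vQ.
have -> : \sum_(i < N.+1) (\1_(Q i.+1) x * (fine (P (Q i)) - fine (P (Q i.+1))))
   = \sum_(i < N.+1 | (i < j)%N) (fine (P (Q i)) - fine (P (Q i.+1))).
  rewrite [RHS]big_mkcond /=; apply: eq_bigr => i _; rewrite indicE.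
  case: ltnP => ij.
    by rewrite mem_set ?mul1r //; exact: (Qmono ij).
  rewrite memNset ?mul0r //; move=> Qi; apply: nQj; exact: (@Qmono j.+1 i.+1 ij).
rewrite -(big_ord_widen N.+1 (fun i : nat => fine (P (Q i)) - fine (P (Q i.+1))) (leqW jN)).
rewrite -(big_mkord xpredT (fun i : nat => fine (P (Q i)) - fine (P (Q i.+1)))).
have := telescope_sumr (fun i => fine (P (Q i))) (leq0n j).
rewrite (_ : \sum_(0 <= k < j) (fine (P (Q k.+1)) - fine (P (Q k))) =
   - \sum_(0 <= k < j) (fine (P (Q k)) - fine (P (Q k.+1)))).
  rewrite Q0 probability_setT /aQ => H; rewrite -[LHS]opprK H /=; lra.
by rewrite -sumrN; apply: eq_bigr => i _; rewrite opprB.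
Qed.

Lemma aQ_mono i j : (i <= j)%N -> aQ i <= aQ j.
Proof.
move=> ij; rewrite /aQ lerD2l lerN2; apply: pr_le => //; exact: Qmono.
Qed.

Lemma vQ_meas : measurable_fun setT vQ.
Proof.
apply: measurable_sum => i; apply: measurable_funM.
  exact: measurable_indic.
exact: measurable_cst.
Qed.

Lemma vQ_bound x : 0 <= vQ x <= 1.
Proof.
have [j [jN [Qj nQj]]] := jx x; rewrite (vQ_eval jN Qj nQj) /aQ.
have := pr_ge0 P (Q j); have := pr_le1 P (mQ j).
by move=> h1 h2; apply/andP; split; lra.
Qed.

Lemma vQ_est c e : 0 < e ->
  fine (P [set x | `|vQ x - c| < e]) <= 2 * e + eps.
Proof.
move=> e0.
have eps0 : 0 < eps.
  have := Qe N; rewrite QN; have := pr_ge0 P (Q N).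
  by rewrite measure0 /=; lra.
pose p j := (j <= N)%N && (`|aQ j - c| < e).
have [[j0 pj0]|nJ] := pselect (exists j, p j); last first.
  rewrite (_ : [set x | `|vQ x - c| < e] = set0).
    by rewrite measure0 /=; lra.
  apply/seteqP; split => x //= Hx; have [j [jN [Qj nQj]]] := jx x.
  apply: nJ; exists j; rewrite /p jN /=.
  by rewrite -(vQ_eval jN Qj nQj).
have ub : forall i, p i -> (i <= N)%N by move=> i /andP[].
case: (ex_minnP (ex_intro _ j0 pj0)) => j1 pj1 min1.
case: (ex_maxnP (ex_intro _ j0 pj0) ub) => j2 pj2 max2.
have j12 : (j1 <= j2)%N by apply: min1.
have mW : measurable [set x | `|vQ x - c| < e].
  apply: mset_lt; last exact: measurable_cst.
  apply: measurableT_comp; first exact: normr_measurable.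
  apply: measurable_funB; [exact: vQ_meas | exact: measurable_cst].
apply: (le_trans (y := fine (P (Q j1 `\` Q j2.+1)))).
  apply: pr_le => //; first exact: measurableD.
  move=> x /= Hx; have [j [jN [Qj nQj]]] := jx x.
  have pj : p j by rewrite /p jN /= -(vQ_eval jN Qj nQj).
  split; first exact: (Qmono (min1 _ pj)).
  move=> Q2; apply: nQj; apply: (Qmono _ Q2); rewrite ltnS; exact: max2.
rewrite pr_D //; last by apply: Qmono; exact: leqW.
have := Qe j2.
move: pj1 pj2; rewrite /p /aQ => /andP[_ h1] /andP[_ h2].
move: h1 h2; rewrite !ltr_norml => /andP[h1 h1'] /andP[h2 h2'].
lra.
Qed.

End P5.

Section P6.
Variable R : realType.
Context d (T : measurableType d) (P : probability T R).
Hypothesis AL : atomless P.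
Local Notation pr A := (fine (P A)).

Lemma halve (E : set T) : measurable E -> 0 < pr E -> forall n : nat,
  exists F, [/\ measurable F, F `<=` E, 0 < pr F & pr F * 2 ^+ n <= pr E].
Proof.
move=> mE E0; elim => [|n [F [mF FE F0 Fb]]].
  by exists E; split => //; rewrite expr0 mulr1.
have F0' : (0 < P F)%E by rewrite -prE // lte_fin.
have [G [mG GF] /andP[G0 GF']] := AL mF F0'.
move: G0 GF'; rewrite -(prE P mG) -(prE P mF) !lte_fin => G0 GF'.
have h2n : 0 <= 2 ^+ n :> R by rewrite exprn_ge0.
case: (leP (pr G * 2) (pr F)) => h.
  exists G; split => //; first exact: subset_trans GF FE.
  have h' : 0 <= pr F - pr G * 2 by rewrite subr_ge0.
  rewrite exprS; have := mulr_ge0 h' h2n.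
  move: Fb; set a := 2 ^+ n; nra.
exists (F `\` G); split.
- exact: measurableD.
- by move=> x [/FE].
- by rewrite pr_D // subr_gt0.
rewrite pr_D // exprS.
have h' : 0 <= pr G * 2 - pr F by rewrite subr_ge0 ltW.
have := mulr_ge0 h' h2n.
move: Fb; set a := 2 ^+ n; nra.
Qed.

Lemma small (E : set T) (e : R) : measurable E -> 0 < pr E -> 0 < e ->
  exists F, [/\ measurable F, F `<=` E, 0 < pr F & pr F < e].
Proof.
move=> mE E0 e0.
pose n := Num.truncn (e^-1).
have [F [mF FE F0 Fb]] := halve mE E0 n.
exists F; split => //.
have h1 : e^-1 < n.+1%:R by exact: truncnS_gt.
have h2 : n.+1%:R <= 2 ^+ n :> R.
  by rewrite -natrX ler_nat; exact: ltn_expl.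
have h3 : pr E <= 1 by exact: pr_le1.
have h4 : e * e^-1 = 1 by rewrite mulfV // gt_eqF.
have h5 : 0 < 2 ^+ n :> R by rewrite exprn_gt0.
move: Fb; set a := 2 ^+ n in h2 h5 *; set b := e^-1 in h1 h4 *; nra.
Qed.

Variable eps : R.
Hypothesis eps0 : 0 < eps.

Lemma greedy (R0 : set T) : measurable R0 -> exists S,
  [/\ measurable S, S `<=` R0, pr S < eps &
    forall S', measurable S' -> S' `<=` R0 -> pr S' < eps -> pr S' <= 2 * pr S].
Proof.
move=> mR0.
pose X := [set pr S' | S' in [set S' | [/\ measurable S', S' `<=` R0 & pr S' < eps]]].
have X0 : X 0 by exists set0; [split => //; rewrite measure0 | rewrite measure0].
have hX : has_sup X.
  by split; [exists 0 | exists eps => _ [S' [_ _ h] <-]; exact: ltW].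
have ub S' : measurable S' -> S' `<=` R0 -> pr S' < eps -> pr S' <= sup X.
  by move=> *; apply: sup_upper_bound => //; exists S'.
case: (leP (sup X) 0) => s0.
  exists set0; split => //; first by rewrite measure0.
  move=> S' mS' SR Se; rewrite measure0 /= mulr0.
  exact: le_trans (ub _ mS' SR Se) s0.
have s2 : 0 < sup X / 2 by rewrite divr_gt0.
have [_ [S [mS SR Se] <-] HS] := sup_adherent s2 hX.
exists S; split => // S' mS' SR' Se'.
have := ub _ mS' SR' Se'; lra.
Qed.

Lemma exhaust : exists (N : nat) (Q : nat -> set T),
  [/\ forall n, measurable (Q n), Q 0%N = setT, forall n, Q n.+1 `<=` Q n,
     Q N.+1 = set0 & forall n, pr (Q n) - pr (Q n.+1) < eps].
Proof.
have : forall R0 : set T, exists S, measurable R0 ->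
  [/\ measurable S, S `<=` R0, pr S < eps &
    forall S', measurable S' -> S' `<=` R0 -> pr S' < eps -> pr S' <= 2 * pr S].
  move=> R0; have [mR0|nmR0] := pselect (measurable R0).
    by have [S HS] := greedy mR0; exists S.
  by exists set0.
move=> /choice [g Hg].
pose Rs n := iter n (fun R0 => R0 `\` g R0) setT.
have RsS n : Rs n.+1 = Rs n `\` g (Rs n) by [].
have mRs n : measurable (Rs n).
  elim: n => [|n IH] /=; first exact: measurableT.
  by apply: measurableD => //; case: (Hg _ IH).
pose S n := g (Rs n).
have HS n := Hg _ (mRs n).
have mS n : measurable (S n) by case: (HS n).
have SR n : S n `<=` Rs n by case: (HS n).
have prRs n : pr (Rs n.+1) = pr (Rs n) - pr (S n).
  by rewrite RsS pr_D //; by [apply: mRs | apply: mS | apply: SR].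
have sumS M : \sum_(n < M) pr (S n) = 1 - pr (Rs M).
  elim: M => [|M IH]; first by rewrite big_ord0 /= probability_setT /= subrr.
  by rewrite big_ord_recr /= IH prRs; lra.
have Rsdec : nonincreasing_seq Rs.
  by apply/nonincreasing_seqP => n; rewrite RsS; apply/subsetPset; exact: subDsetl.
pose I := \bigcap_n Rs n.
have mI : measurable I by exact: bigcapT_measurable.
have I0 : pr I = 0.
  apply/eqP; rewrite eq_le pr_ge0 andbT; rewrite leNgt; apply/negP => I0.
  have [F [mF FI F0 Fe]] := small mI I0 eps0.
  have FS n : pr F <= 2 * pr (S n).
    by case: (HS n) => _ _ _; apply => //; move=> x /FI; apply.
  pose M := (Num.truncn (2 / pr F)).+1.
  have hM : 2 / pr F < M%:R by exact: truncnS_gt.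
  have : \sum_(n < M) pr F <= 2.
    apply: (le_trans (y := \sum_(n < M) 2 * pr (S n))).
      by apply: ler_sum => n _; exact: FS.
    rewrite -mulr_sumr sumS; have := pr_ge0 P (Rs M); lra.
  rewrite sumr_const card_ord -mulr_natr.
  have h4 : pr F * (pr F)^-1 = 1 by rewrite mulfV // gt_eqF.
  move: hM; set b := (pr F)^-1 in h4 *; set m := M%:R.
  nra.
have H0 : (P \o Rs) @ \oo --> P I.
  apply: (nonincreasing_cvg_mu (mu := P)).
  - by rewrite ltey_eq fin_num_measure.
  - exact: mRs.
  - exact: mI.
  - exact: Rsdec.
move: H0; rewrite -(prE P mI) I0 => /fine_cvg /cvgr_lt /(_ eps eps0) [N _ HN].
have RN : pr (Rs N) < eps by apply: (HN N) => /=.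
exists N, (fun n => if (n <= N)%N then Rs n else set0); split.
- by move=> n; case: ifP.
- by [].
- move=> n; case: ifP => h; case: ifP => h'.
  + by rewrite RsS; exact: subDsetl.
  + by move: h'; rewrite (ltnW h).
  + exact: sub0set.
  + exact: sub0set.
- by rewrite ltnn.
move=> n; case: ifP => h; case: ifP => h'.
- by rewrite prRs; have [_ _ ? _] := HS n; lra.
- rewrite measure0 /= subr0.
  have -> : n = N by apply/eqP; rewrite eqn_leq h /= leqNgt h'.
  exact: RN.
- by move: h; rewrite (ltnW h').
- by rewrite measure0 /= subrr.
Qed.

End P6.

Section P7.
Variable R : realType.

Lemma diffuse_v d (T : measurableType d) (P : probability T R) : atomless P ->
  forall eps : R, 0 < eps -> exists v : T -> R,
  [/\ measurable_fun setT v, forall x, -1 <= v x <= 1 &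
      forall c e, 0 < e -> fine (P [set x | `|v x - c| < e]) <= 2 * e + eps].
Proof.
move=> AL eps eps0; have [N [Q [mQ Q0 QS QN Qe]]] := exhaust AL eps0.
exists (vQ P N Q); split.
- exact: vQ_meas.
- move=> x; have H : 0 <= vQ P N Q x <= 1 by apply: vQ_bound.
  by move: H => /andP[h1 h2]; apply/andP; split; lra.
- by move=> c e e0; apply: vQ_est.
Qed.

Lemma coord_le n (x y : 'rV[R]_n) j : `|x ord0 j - y ord0 j| <= Defs.edist x y.
Proof.
rewrite /Defs.edist -sqrtr_sqr; apply: ler_wsqrtr; rewrite (bigD1 j) //= lerDl.
by apply: sumr_ge0 => i _; exact: sqr_ge0.
Qed.

Lemma neigh_slab n j (c e : R) :
  neigh [set y : 'rV[R]_n | y ord0 j = c] e = [set y | `|y ord0 j - c| < e].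
Proof.
apply/seteqP; split => y /=.
  by move=> [a Ha Hd]; rewrite -Ha; exact: le_lt_trans (coord_le y a j) Hd.
move=> H; exists (\row_i (if i == j then c else y ord0 i)); first by rewrite /= mxE eqxx.
rewrite /Defs.edist (bigD1 j) //= big1 ?addr0.
  by rewrite ?mxE eqxx sqrtr_sqr.
by move=> i /negbTE ij; rewrite ?mxE ij subrr expr0n.
Qed.

Lemma borel_slab n j (c : R) : borel [set y : 'rV[R]_n | y ord0 j = c].
Proof.
have -> : [set y : 'rV[R]_n | y ord0 j = c] = setT `\` [set y | y ord0 j != c].
  apply/seteqP; split => y /=; first by move=> ->; split => //; rewrite eqxx.
  by move=> [_ /negP]; rewrite negbK => /eqP.
apply: sigma_algebraCD; apply: sub_sigma_algebra => /= y yc.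
exists `|y ord0 j - c|; first by rewrite normr_gt0 subr_eq0.
move=> z /= Hz; apply/eqP => zc.
have := le_lt_trans (coord_le z y j) Hz; rewrite zc distrC ltxx //.
Qed.

End P7.

Unset Implicit Arguments.

Theorem lemma3p2 (R : realType)
  (dA : nat -> measure_display) (TA : forall i, measurableType (dA i))
  (PA : forall i, probability (TA i) R)
  (A : forall i, (TA i -> R) -> (TA i -> R))
  (d2 : measure_display) (T2 : measurableType d2) (P2 : probability T2 R)
  (B : (T2 -> R) -> (T2 -> R)) :
  (forall i, Poperator (PA i) (A i)) ->
  (forall i, atomless (PA i)) ->
  Poperator P2 B ->
  (fun i => dM (PA i) (A i) P2 B) @ \oo --> (0 : R) ->
  atomless P2.
Proof.
move=> HA ALA HB Hcvg; apply: contrapT => nAL.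
have [E [mE PE0 HE]] : exists E, [/\ measurable E, (0 < P2 E)%E &
    forall F, measurable F -> F `<=` E -> ~ (0 < P2 F < P2 E)%E].
  apply: contrapT => H; apply: nAL => E mE PE0; apply: contrapT => nF.
  by apply: H; exists E; split => // F mF FE Hlt; apply: nF; exists F.
pose p := fine (P2 E).
have p0 : 0 < p by rewrite -lte_fin /p prE.
pose j0 : 'I_(1 + 1) := unsplit (inl ord0).
have key i : p / 12 <= dM (PA i) (A i) P2 B.
  have p2 : 0 < p / 2 by rewrite divr_gt0.
  have [v [mv bv Hv]] := diffuse_v (ALA i) p2.
  pose vv : 'I_1 -> TA i -> R := fun _ => v.
  have Hvv : forall k, measurable_fun setT (vv k) /\ forall x, -1 <= vv k x <= 1 by [].
  pose mu := law (PA i) (jointvec (A i) vv).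
  have Smu : Sk (PA i) (A i) (k:=1) mu by exists vv.
  rewrite /dM; apply: le_trans (dM_ge _); last first.
    by move=> k; apply: dH_bounds; apply: Sk_allLw.
  suff : p / 6 <= dH (Sk (PA i) (A i) (k:=1)) (Sk P2 B (k:=1)) by lra.
  apply: (dH_ge (mu0 := mu)) => //; try exact: Sk_allLw.
  move=> _ [w Hw <-].
  apply: LP_ge.
  - apply: law_Lw; exact: jointvec_meas (HA i) Hvv.
  - apply: law_Lw; exact: jointvec_meas HB Hw.
  move=> e [e0 He].
  have [c Hc] := atom_const mE PE0 HE (Hw ord0).1.
  have [_ H2] := He _ (borel_slab j0 c).
  move: H2; rewrite neigh_slab /mu /law.
  rewrite (_ : jointvec B w @^-1` [set y | y ord0 j0 = c] = [set x | w ord0 x = c]);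
    last by apply/seteqP; split => x; rewrite /= /jointvec mxE unsplitK.
  rewrite (_ : jointvec (A i) vv @^-1` [set y | `|y ord0 j0 - c| < e] =
     [set x | `|v x - c| < e]);
    last by apply/seteqP; split => x; rewrite /= /jointvec mxE unsplitK.
  have h0 : fine (P2 (E `&` [set x | w ord0 x = c])) = p by rewrite Hc.
  have h1 : p <= fine (P2 [set x | w ord0 x = c]).
    rewrite -h0; apply: pr_le.
    - apply: measurableI => //; apply: mset_eq; exact: (Hw ord0).1.
    - apply: mset_eq; exact: (Hw ord0).1.
    - by move=> x [].
  have h2 := Hv c e e0.
  lra.
have p12 : 0 < p / 12 by rewrite divr_gt0.
move: Hcvg => /cvgr_lt /(_ (p / 12) p12) [N _ HN].
have := HN N (leqnn N); have := key N; rewrite /=; lra.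
Qed.
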